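(* Assume $\lfloor (M_1+\dots+M_n)/p\rfloor=n-1$ (ample reduction), and let $c(z)=(c^l_j(z))_{l,j=1,\dots,n-1}$ be defined by $I^{[l]}(z)=\sum_{j=1}^{n-1}c^l_j(z)w_j$, where $w_j=M_j^{-1}e_j-M_{j+1}^{-1}e_{j+1}$. Then for any $i\ne j$ the polynomial $\det c(z)$ is divisible by $(z_i-z_j)^{M_i+M_j-p}$.
   Context: $p,q$ are primes, $n$ a positive integer with $p>n\ge2$, $p>q$; $m_1,\dots,m_n$ are positive integers $<q$; $M_i$ is the least positive integer with $M_i\equiv -m_iq^{-1}\pmod p$ (its residue in formulas over $\mathbb{F}_p$). $e_1,\dots,e_n$ is the standard basis of $\mathbb{F}_p^n$. With $\Phi_p(x,z)=\prod_i(x-z_i)^{M_i}$, $I^{[l]}(z)\in\mathbb{F}_p[z_1,\dots,z_n]^n$ is the coefficient of $x^{lp-1}$ in $(\Phi_p/(x-z_1),\dots,\Phi_p/(x-z_n))$; its coefficient vectors lie in $\{c:\sum_im_ic_i=0\}$, of which $w_1,\dots,w_{n-1}$ is a basis. (Under the hypothesis, $M_i+M_j-p>0$.) *)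

(* Defs.v *)
From HB Require Import structures.
From mathcomp Require Import all_boot all_order all_algebra.
From mathcomp Require Import mpoly.
Set Implicit Arguments. Unset Strict Implicit. Unset Printing Implicit Defensive.
Import GRing.Theory.
Local Open Scope ring_scope.

(* Variables z_1..z_n are 'X_k, k : 'I_n (0-based).  The auxiliary variable x is
   the variable 'X of {poly {mpoly 'F_p[n]}}. *)

(* Phi_p(x,z) / (x - z_i) = prod_k (x - z_k)^(M_k - [k = i]) (exact division, M_i >= 1) *)
Definition Phi_div (p n : nat) (M : 'I_n -> nat) (i : 'I_n)
  : {poly {mpoly 'F_p[n]}} :=
  \prod_(k < n) ('X - ('X_k)%:P) ^+ (if k == i then (M k).-1 else M k).

Definition Icoef (p n : nat) (M : 'I_n -> nat) (l : nat) (i : 'I_n)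
  : {mpoly 'F_p[n]} :=
  (Phi_div p M i)`_((l * p).-1).

(* w_j = M_j^{-1} e_j - M_{j+1}^{-1} e_{j+1}, for j = 1..n-1; here j : 'I_(n.-1)
   is 0-based, so w j has entry M_k^{-1} at k = j and -M_k^{-1} at k = j+1. *)
Definition wvec (p n : nat) (M : 'I_n -> nat) (j : 'I_n.-1) (k : 'I_n) : 'F_p :=
  if (k : nat) == (j : nat) then ((M k)%:R)^-1
  else if (k : nat) == (j : nat).+1 then - ((M k)%:R)^-1
  else 0.

(* Main.v *)
Require Import Defs.
From HB Require Import structures.
From mathcomp Require Import all_boot all_order all_algebra.
From mathcomp Require Import mpoly.
From mathcomp Require Import zify ring.
Import GRing.Theory.
Local Open Scope ring_scope.

Lemma binG (R : comNzRingType) (Y T : R) (p : nat) :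
  forall b a e, (e == 0%N) || (p + e <= a + b + 1)%N ->
  exists U V, Y ^+ a * (Y + T) ^+ b = Y ^+ p * U + T ^+ e * V.
Proof.
elim=> [|b IH] a e.
  case: e => [_|e /= H]; first by exists 0, (Y ^+ a); ring.
  exists (Y ^+ (a - p)), 0; rewrite mulr0 addr0 expr0 mulr1 -exprD.
  by congr (_ ^+ _); lia.
case: e => [_|e H]; first by exists 0, (Y ^+ a * (Y + T) ^+ b.+1); ring.
have H1 : (e.+1 == 0%N) || (p + e.+1 <= a.+1 + b + 1)%N by apply/orP; right; move: H => /=; lia.
have H2 : (e == 0%N) || (p + e <= a + b + 1)%N.
  by case: e H {H1} => [|e'] H //; apply/orP; right; move: H => /=; lia.
have [U1 [V1 E1]] := IH a.+1 e.+1 H1.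
have [U2 [V2 E2]] := IH a e H2.
exists (U1 + T * U2), (V1 + V2).
have E : Y ^+ a * (Y + T) ^+ b.+1 = Y ^+ a.+1 * (Y + T) ^+ b + T * (Y ^+ a * (Y + T) ^+ b)
  by rewrite !exprS; ring.
rewrite E E1 E2 !exprS; ring.
Qed.

Definition Lam (R : comNzRingType) (p N : nat) (c : R) (f : {poly R}) : R :=
  \sum_(l < N) c ^+ l * f`_((l.+1 * p).-1).
Arguments Lam {R}.

Lemma Lam_add (R : comNzRingType) p N c (f g : {poly R}) :
  Lam p N c (f + g) = Lam p N c f + Lam p N c g.
Proof. by rewrite /Lam -big_split; apply: eq_bigr => l _; rewrite coefD mulrDr. Qed.

Lemma Lam_scale (R : comNzRingType) p N c a (f : {poly R}) :
  Lam p N c (a%:P * f) = a * Lam p N c f.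
Proof.
rewrite /Lam mulr_sumr; apply: eq_bigr => l _; rewrite coefCM; ring.
Qed.

Lemma Lam_tele (R : comNzRingType) p N c (U : {poly R}) : (0 < p)%N ->
  Lam p N.+1 c (('X^p - c%:P) * U) = - (c ^+ N.+1 * U`_((N.+1 * p).-1)).
Proof.
move=> p0; elim: N => [|N IH].
  rewrite /Lam big_ord1 mulrBl coefB coefXnM coefCM ifT; last by rewrite /= mul1n; lia.
  by rewrite expr0 expr1 mul1r sub0r.
rewrite /Lam big_ord_recr /= -/(Lam p N.+1 c _) IH mulrBl coefB coefXnM coefCM ifF; last by lia.
have -> : ((N.+2 * p).-1 - p = (N.+1 * p).-1)%N by rewrite mulSn; lia.
rewrite !exprS; ring.
Qed.
Lemma size_prodX (R : comNzRingType) n (a : 'I_n -> R) (d : 'I_n -> nat) :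
  (size (\prod_(k < n) ('X - (a k)%:P) ^+ d k)%R <= (\sum_(k < n) d k).+1)%N.
Proof.
elim/big_rec2: _ => [|k s P _ IH]; first by rewrite size_poly1.
apply: leq_trans (size_mul_leq _ _) _; rewrite size_exp_XsubC; lia.
Qed.

Lemma frobX p n (a : {mpoly 'F_p[n]}) : prime p ->
  ('X - a%:P) ^+ p = 'X^p - (a ^+ p)%:P.
Proof.
move=> pr.
have pc : p \in [pchar {poly {mpoly 'F_p[n]}}].
  apply: (rmorph_pchar (@polyC _)); apply: (rmorph_pchar (@mpolyC n _)).
  exact: pchar_Fp.
rewrite -!(pFrobenius_autE pc) pFrobenius_autB_comm; last exact: mulrC.
by rewrite !pFrobenius_autE rmorphXn.
Qed.

Lemma Lam_ext (R : comNzRingType) p L K c (f : {poly R}) :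
  (size f <= (L.+1 * p).-1)%N -> Lam p L c f = Lam p (L + K) c f.
Proof.
move=> Hs; rewrite /Lam big_split_ord /= [X in _ = _ + X]big1 ?addr0 //.
move=> l _; rewrite nth_default ?mulr0 //; apply: leq_trans Hs _.
rewrite -!subn1 leq_sub2r // leq_mul2r; apply/orP; right; lia.
Qed.

Lemma col_div p n (M : 'I_n -> nat) (i j k : 'I_n) L : prime p -> i != j ->
  (forall r, (0 < M r)%N) -> (\sum_r M r < L.+1 * p)%N ->
  exists g : {mpoly 'F_p[n]},
    Lam p L ('X_i ^+ p) (Phi_div p M k) = ('X_i - 'X_j) ^+ (M i + M j - p) * g.
Proof.
move=> pr ij M0 HS.
pose d := fun r => if r == k then (M r).-1 else M r.
have Hd : ((\sum_r d r).+1 = \sum_r M r)%N.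
  rewrite (bigD1 k) //= [in RHS](bigD1 k) //= {1}/d eqxx.
  have -> : (\sum_(r | r != k) d r = \sum_(r | r != k) M r)%N.
    by apply: eq_bigr => r /negbTE; rewrite /d => ->.
  by rewrite -addSn prednK ?M0.
pose P : {poly {mpoly 'F_p[n]}} := 'X - ('X_i)%:P.
pose t : {mpoly 'F_p[n]} := 'X_i - 'X_j.
have HQ : 'X - ('X_j)%:P = P + t%:P by rewrite /P /t rmorphB /=; ring.
pose H : {poly {mpoly 'F_p[n]}} := \prod_(r | (r != i) && (r != j)) ('X - ('X_r)%:P) ^+ d r.
have Hphi : Phi_div p M k = P ^+ d i * ('X - ('X_j)%:P) ^+ d j * H.
  rewrite /Phi_div (bigD1 i) //= (bigD1 j) /=; last by rewrite eq_sym.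
  by rewrite mulrA.
have He : (M i + M j - p == 0)%N || (p + (M i + M j - p) <= d i + d j + 1)%N.
  have Hij : (M i + M j <= d i + d j + 1)%N.
    have := M0 i; have := M0 j; rewrite /d.
    case: ifP => /eqP Hi; case: ifP => /eqP Hj; try lia.
    by move: ij; rewrite Hi Hj eqxx.
  apply/orP; lia.
have [U [V E]] := binG _ P (t%:P) p (d j) (d i) _ He.
have Hsz : (size (Phi_div p M k) <= (L.+1 * p).-1)%N.
  apply: leq_trans (size_prodX _ _ (fun r => 'X_r) d) _; rewrite Hd; lia.
rewrite (Lam_ext _ _ _ (size (U * H)%R).+1 _ _ Hsz) Hphi HQ E mulrDl -!mulrA Lam_add.
rewrite /P frobX // -rmorphXn Lam_scale addnS Lam_tele ?prime_gt0 //.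
rewrite [X in - (_ * X)]nth_default ?mulr0 ?oppr0 ?add0r.
  by eexists; rewrite /t.
set s := size (U * H)%R.
have : ((L + s).+1 <= (L + s).+1 * p)%N by rewrite leq_pmulr // prime_gt0.
lia.
Qed.

Lemma natFp_neq0 p x : prime p -> (0 < x < p)%N -> (x%:R : 'F_p) != 0.
Proof.
move=> pr /andP[x0 xp]; rewrite -(dvdn_pcharf (pchar_Fp pr)).
by apply/negP => /(dvdn_leq x0); lia.
Qed.

Lemma sum_div (R : comNzRingType) (I : Type) (r : seq I) (F : I -> R) a :
  (forall s, exists g, F s = a * g) -> exists g, \sum_(s <- r) F s = a * g.
Proof.
move=> H; elim/big_rec: _ => [|s x _ [g ->]]; first by exists 0; rewrite mulr0.
by have [h ->] := H s; exists (h + g); rewrite mulrDr.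
Qed.

Theorem lemma7p6 (p q n : nat) (m M : 'I_n -> nat)
  (c : 'I_n.-1 -> 'I_n.-1 -> {mpoly 'F_p[n]}) (i j : 'I_n) :
  prime p -> prime q -> (q < p)%N -> (2 <= n)%N -> (n < p)%N ->
  (forall k, (0 < m k)%N && (m k < q)%N) ->
  (* M_k = least positive integer with M_k = - m_k q^{-1} (mod p) *)
  (forall k, (0 < M k)%N /\
     ((M k)%:R = - ((m k)%:R) / (q%:R) :> 'F_p) /\
     (forall t : nat, (0 < t)%N -> (t%:R = - ((m k)%:R) / (q%:R) :> 'F_p) ->
        (M k <= t)%N)) ->
  (* ample reduction *)
  ((\sum_(k < n) M k) %/ p)%N = n.-1 ->
  (* c(z) is defined by I^{[l]}(z) = sum_j c^l_j(z) w_j, l = 1..n-1 *)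
  (forall (l : 'I_n.-1) (k : 'I_n),
     Icoef p M (l.+1) k = \sum_(t < n.-1) c l t * (wvec p M t k)%:MP) ->
  i != j ->
  exists g : {mpoly 'F_p[n]},
    \det (\matrix_(l, t) c l t) = ('X_i - 'X_j) ^+ (M i + M j - p) * g.
Proof.
move: m M c i j; case: n => [|[|n']] m M c i j; try by move=> _ _ _.
move=> pr prq qp n2 np hm hM hsum hc ij.
have M0 : forall r, (0 < M r)%N by move=> r; case: (hM r).
have MF : forall r, ((M r)%:R : 'F_p) != 0.
  move=> r; have [_ [-> _]] := hM r.
  have qn : (q%:R : 'F_p) != 0 by apply: natFp_neq0 => //; rewrite prime_gt0.
  have mn : ((m r)%:R : 'F_p) != 0.
    by apply: natFp_neq0 => //; have := hm r; lia.
  by rewrite mulf_eq0 invr_eq0 oppr_eq0 negb_or mn qn.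
pose sg (s : 'I_n'.+1) : 'I_n'.+2 := widen_ord (leqnSn _) s.
pose A : 'M[{mpoly 'F_p[n'.+2]}]_n'.+1 := \matrix_(l, s) Icoef p M l.+1 (sg s).
pose W : 'M[{mpoly 'F_p[n'.+2]}]_n'.+1 := \matrix_(t, s) (wvec p M t (sg s))%:MP.
have hA : A = (\matrix_(l, t) c l t) *m W.
  apply/matrixP => l s; rewrite !mxE hc; apply: eq_bigr => t _; rewrite !mxE.
  by [].
pose w : 'F_p := \prod_(s < n'.+1) ((M (sg s))%:R)^-1.
have hW : \det W = w%:MP.
  rewrite -det_tr det_trig; last first.
    apply/is_trig_mxP => a b ab; rewrite !mxE /wvec /=.
    rewrite ifF; last by apply/eqP; lia.
    by rewrite ifF ?rmorph0 //; apply/eqP; lia.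
  rewrite rmorph_prod; apply: eq_bigr => s _; rewrite !mxE /wvec /= eqxx.
  by [].
have wn : w != 0.
  by rewrite prodf_seq_neq0; apply/allP => s _ /=; rewrite invr_eq0 MF.
have hdetC : \det (\matrix_(l, t) c l t) = \det A * (w^-1)%:MP.
  rewrite hA det_mulmx hW -mulrA -rmorphM divff // rmorph1 mulr1.
  by [].
pose E : 'M[{mpoly 'F_p[n'.+2]}]_n'.+1 :=
  \matrix_(r, l) if r == ord0 then ('X_i ^+ p) ^+ l else (r == l)%:R.
have hE : \det E = 1.
  rewrite -det_tr det_trig; last first.
    apply/is_trig_mxP => a b ab; rewrite !mxE.
    rewrite ifF; last by apply/eqP => b0; move: ab; rewrite b0.
    by have -> : (b == a) = false by apply/eqP => ba; move: ab; rewrite ba ltnn.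
  by apply: big1 => s _; rewrite !mxE eqxx; case: ifP => // /eqP ->; rewrite expr0.
have hdetA : \det A = \det (E *m A) by rewrite det_mulmx hE mul1r.
have HS : (\sum_r M r < n'.+2 * p)%N by rewrite -ltn_divLR ?prime_gt0 // hsum.
have [g hg] : exists g, \det A = ('X_i - 'X_j) ^+ (M i + M j - p) * g.
  rewrite hdetA (expand_det_row _ ord0) -big_enum /=.
  apply: sum_div => s.
  have [g hg] := @col_div p _ M i j (sg s) n'.+1 pr ij M0 HS.
  have -> : (E *m A) ord0 s = Lam p n'.+1 ('X_i ^+ p) (Phi_div p M (sg s)).
    by rewrite !mxE; apply: eq_bigr => l _; rewrite !mxE.
  by rewrite hg -mulrA; eexists.
by exists (g * (w^-1)%:MP); rewrite hdetC hg mulrA.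
Qed.
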